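(* Let $n\ge 1$ and $m\ge 2$ be integers with $m\nmid n$, let $t$ be an integer with $m\mid t$, let $k,s$ be nonnegative integers, and let $f=\sum_{i=0}^{k}a_i\theta_{m,i}$ and $g=\theta_{m,0}+\sum_{j=1}^{s}b_j\theta_{m,j}$ with $a_i,b_j\in\mathbb{F}_2$. Then $$(S^t\circ f)\odot\bigodot_{v\in\{1,2,\dots,m-1\}}\left(S^{t-v}\circ g+\mathbf{1}\right)=S^{t-m}\circ\left(\sum_{i=0}^{k}a_i\theta_{m,i+1}\right).$$
   Context: For $x=(x_0,\dots,x_{n-1})\in\mathbb{F}_2^n$, indices are taken modulo $n$. $S$ is the cyclic left shift $S(x_0,\dots,x_{n-1})=(x_1,\dots,x_{n-1},x_0)$; $S^i$ denotes its $i$-th power for any integer $i$ (so $S^n$ is the identity and negative powers are powers of the inverse). Maps $\mathbb{F}_2^n\to\mathbb{F}_2^n$ are added pointwise, composed by $\circ$, and multiplied by the Hadamard product $(f\odot g)(x)=(f_0(x)g_0(x),\dots,f_{n-1}(x)g_{n-1}(x))$ where $f_i,g_i$ are coordinate functions; $\bigodot$ denotes an iterated Hadamard product. $\mathbf{1}$ denotes the constant map with value $(1,\dots,1)$. For a nonnegative integer $k$, $\theta_{m,k}\colon\mathbb{F}_2^n\to\mathbb{F}_2^n$ is defined by $\theta_{m,k}(x)=y$ with $y_i=x_{i+mk}\prod_{1\le j\le mk-1,\ m\nmid j}(x_{i+j}+1)$; equivalently $\theta_{m,k}=S^{mk}\odot\bigodot_{1\le j\le mk-1,\,m\nmid j}(S^j+\mathbf{1})$,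 and $\theta_{m,0}$ is the identity map. *)

(* Defs.v *)
From mathcomp Require Import all_boot all_order all_algebra.
Set Implicit Arguments. Unset Strict Implicit. Unset Printing Implicit Defensive.
Import GRing.Theory.

(* Vectors of F_2^n are functions 'I_n -> bool (true = 1, xor is addition, andb is product). *)
Definition vec (n : nat) := 'I_n -> bool.
Definition map2 (n : nat) := vec n -> vec n.

Definition getz (n : nat) (x : vec n) (z : int) : bool :=
  match @insub nat (fun k => k < n) _ (absz (z %% n%:Z)%Z) with
  | Some i => x i
  | None => false
  end.

Definition shiftz (n : nat) (i : int) : map2 n :=
  fun x j => getz x ((nat_of_ord j)%:Z + i)%R.

Definition madd n (f g : map2 n) : map2 n := fun x j => addb (f x j) (g x j).
Definition mzero n : map2 n := fun _ _ => false.
Definition mscale n (c : bool) (f : map2 n) : map2 n := fun x j => c && f x j.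
Definition mcomp n (f g : map2 n) : map2 n := fun x => f (g x).
Definition mhad n (f g : map2 n) : map2 n := fun x j => f x j && g x j.
Definition mone n : map2 n := fun _ _ => true.

Definition theta (n m k : nat) : map2 n :=
  fun x i => getz x ((nat_of_ord i)%:Z + (m * k)%:Z)%R &&
    \big[andb/true]_(1 <= j < m * k | ~~ (m %| j)) ~~ getz x ((nat_of_ord i)%:Z + j%:Z)%R.
Arguments theta : clear implicits.
Arguments shiftz : clear implicits.

(* Main.v *)
Require Import Defs.
From mathcomp Require Import all_boot all_order all_algebra zify.
Import GRing.Theory.
Set Implicit Arguments. Unset Strict Implicit.

Lemma ordz_lt n (hn : (0 < n)%N) (z : int) : (absz (z %% (Posz n))%Z < n)%N.
Proof.
have h1 := @modz_ge0 z (Posz n). have h2 := @ltz_pmod z (Posz n).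
have : (0 <= (z %% (Posz n))%Z < (Posz n))%R.
  apply/andP; split; [apply: h1 | apply: h2]; lia.
lia.
Qed.

Lemma getzE n (hn : (0 < n)%N) (x : vec n) z : getz x z = x (Ordinal (ordz_lt hn z)).
Proof.
rewrite /getz; case: insubP => [j _ hj | hn'].
  by congr x; apply: val_inj; rewrite /= hj.
by rewrite ordz_lt in hn'.
Qed.

Lemma getz_mod n (x : vec n) a b : (a %% (Posz n) = b %% (Posz n))%Z -> getz x a = getz x b.
Proof. by rewrite /getz => ->. Qed.

Lemma absz_mod n (hn : (0 < n)%N) z : (Posz (absz (z %% (Posz n))%Z) = z %% (Posz n))%Z.
Proof. have := ordz_lt hn z. have h1 := @modz_ge0 z (Posz n). have : (0 <= (z %% (Posz n))%Z)%R by apply: h1; lia.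
lia. Qed.

Definition Th n m (x : vec n) k (z : int) : bool :=
  getz x (z + (Posz (m * k)))%R &&
    \big[andb/true]_(1 <= r < m * k | ~~ (m %| r)) ~~ getz x (z + (Posz r))%R.

Lemma thetaE n m (hn : (0 < n)%N) (x : vec n) k z :
  getz (theta n m k x) z = Th m x k z.
Proof.
rewrite getzE /theta /Th /=.
have E c : getz x (Posz (absz (z %% (Posz n))%Z) + c)%R = getz x (z + c)%R.
  by apply: getz_mod; rewrite absz_mod // modzDml.
rewrite E; congr andb; apply: eq_bigr => r _; by rewrite E.
Qed.

Lemma bigandP (lo hi : nat) (P : pred nat) (F : nat -> bool) :
  reflect (forall r, (lo <= r < hi)%N -> P r -> F r)
          (\big[andb/true]_(lo <= r < hi | P r) F r).
Proof.
rewrite big_all_cond; apply: (iffP allP) => H r.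
  move=> hr Pr; have := H r; rewrite mem_iota /= Pr /=; apply; lia.
rewrite mem_iota => hr /=; apply/implyP => Pr; apply: H => //; lia.
Qed.

Lemma ThP n m (x : vec n) k z :
  reflect (getz x (z + (Posz (m * k)))%R /\
           forall r, (1 <= r < m * k)%N -> ~~ (m %| r)%N -> ~~ getz x (z + (Posz r))%R)
          (Th m x k z).
Proof.
rewrite /Th; apply: (iffP andP) => [[h1 /bigandP h2] | [h1 h2]]; split => //.
by apply/bigandP.
Qed.

Lemma ndvd m u : (0 < u < m)%N -> ~~ (m %| u)%N.
Proof. move=> h; apply/negP => /dvdn_leq; lia. Qed.

Lemma gz n (x : vec n) a b : a = b -> getz x a = getz x b.
Proof. by move=> ->. Qed.

Lemma decomp n m (x : vec n) l p : (0 < m)%N ->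
  Th m x l.+1 p = Th m x l (p + Posz m)%R && \big[andb/true]_(1 <= u < m) ~~ getz x (p + Posz u)%R.
Proof.
move=> hm.
apply/ThP/andP => [[h1 h2] | [/ThP [h1 h2] /bigandP h3]]; split.
- apply/ThP; split.
    by rewrite -(gz x (a := (p + Posz (m * l.+1))%R)) //; lia.
  move=> r hr hd; rewrite -(gz x (a := (p + Posz (m + r))%R)); last by lia.
  apply: h2; first by rewrite mulnS; lia.
  by rewrite dvdn_addr.
- apply/bigandP => u hu _; apply: h2; first by rewrite mulnS; lia.
  apply: ndvd; lia.
- by rewrite -(gz x (a := (p + Posz m + Posz (m * l))%R)) //; lia.
- move=> r hr hd; case: (ltnP r m) => hrm.
    by apply: h3 => //; lia.
  have hne : r <> m by move=> e; rewrite e dvdnn in hd.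
  rewrite -(gz x (a := (p + Posz m + Posz (r - m))%R)); last by lia.
  apply: h2; first by rewrite mulnS in hr; lia.
  by rewrite -(dvdn_addr _ (dvdnn m)) subnKC.
Qed.

Lemma key n m (x : vec n) j l p u : (0 < u < m)%N -> (0 < j)%N ->
  Th m x j (p + Posz u)%R -> Th m x l (p + Posz m)%R -> False.
Proof.
move=> hu hj /ThP [h1 h2] /ThP [h3 h4].
case: j hj h1 h2 => // j _ h1 h2.
case: (ltngtP (u + m * j.+1) (m + m * l)) => hc.
- suff: ~~ getz x (p + Posz u + Posz (m * j.+1))%R by rewrite h1.
  rewrite (gz x (b := (p + Posz m + Posz (u + m * j))%R)); last by rewrite mulnS; lia.
  apply: h4; first by rewrite mulnS in hc; lia.
  rewrite dvdn_addl ?dvdn_mulr //; apply: ndvd; lia.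
- suff: ~~ getz x (p + Posz m + Posz (m * l))%R by rewrite h3.
  rewrite (gz x (b := (p + Posz u + Posz (m * l.+1 - u))%R)); last by rewrite mulnS; lia.
  apply: h2; first by rewrite mulnS in hc *; lia.
  rewrite dvdn_subr ?dvdn_mulr //; first (apply: ndvd; lia).
  rewrite mulnS; lia.
- have : (m %| u + m * j.+1)%N by rewrite hc dvdn_addr ?dvdn_mulr.
  rewrite dvdn_addl ?dvdn_mulr // => hd.
  by move: (ndvd hu); rewrite hd.
Qed.

Lemma Th0 n m (x : vec n) z : Th m x 0 z = getz x z.
Proof. by rewrite /Th muln0 addr0 big_geq // andbT. Qed.

Lemma getz_big n (hn : (0 < n)%N) (x : vec n) (I : Type) (r : seq I) (P : pred I) (F : I -> map2 n) z :
  getz ((\big[@madd n/@mzero n]_(l <- r | P l) F l) x) z =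
  \big[addb/false]_(l <- r | P l) getz (F l x) z.
Proof.
rewrite getzE (big_morph (fun h : map2 n => h x (Ordinal (ordz_lt hn z))) (id1:=false) (op1:=addb)) //.
by apply: eq_bigr => l _; rewrite getzE.
Qed.

Lemma getz_scale n (hn : (0 < n)%N) (x : vec n) c h z :
  getz (mscale c h x) z = c && getz (h x) z.
Proof. by rewrite !getzE. Qed.

Lemma getz_add n (hn : (0 < n)%N) (x : vec n) f g z :
  getz (madd f g x) z = getz (f x) z (+) getz (g x) z.
Proof. by rewrite !getzE. Qed.

Lemma had_big n (x : vec n) i (I : Type) (r : seq I) (P : pred I) (F : I -> map2 n) :
  (\big[@mhad n/@mone n]_(l <- r | P l) F l) x i = \big[andb/true]_(l <- r | P l) F l x i.
Proof.
by rewrite (big_morph (fun h : map2 n => h x i) (id1:=true) (op1:=andb)).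
Qed.

Lemma xor_distr (I : Type) (r : seq I) (F : I -> bool) C :
  \big[addb/false]_(l <- r) (F l && C) = (\big[addb/false]_(l <- r) F l) && C.
Proof.
elim: r => [|h r IH]; rewrite ?big_nil ?big_cons // IH.
by case: (F h); case: C IH; case: (\big[addb/false]_(j <- r) F j).
Qed.

Lemma xor_ex (I : Type) (r : seq I) (F : I -> bool) :
  \big[addb/false]_(l <- r) F l -> exists l, F l.
Proof.
elim: r => [|h r IH]; rewrite ?big_nil ?big_cons //.
case hF: (F h) => /=; first by move=> _; exists h.
exact: IH.
Qed.

Lemma xor_false (I : Type) (r : seq I) (P : pred I) (F : I -> bool) :
  (forall l, P l -> F l = false) -> \big[addb/false]_(l <- r | P l) F l = false.
Proof. move=> H; rewrite big1 //. Qed.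
Unset Implicit Arguments.

Theorem lemma3 (n m : nat) (t : int) (k s : nat) (a b : nat -> bool) :
  (1 <= n)%N -> (2 <= m)%N -> ~~ (m %| n)%N -> (m%:Z %| t)%Z ->
  let f : map2 n := \big[@madd n/@mzero n]_(i < k.+1) mscale (a i) (theta n m i) in
  let g : map2 n := madd (theta n m 0)
        (\big[@madd n/@mzero n]_(1 <= j < s.+1) mscale (b j) (theta n m j)) in
  forall (x : vec n) (i : 'I_n),
    mhad (mcomp (shiftz n t) f)
         (\big[@mhad n/@mone n]_(1 <= v < m)
             madd (mcomp (shiftz n (t - v%:Z)%R) g) (@mone n)) x i
    = mcomp (shiftz n (t - m%:Z)%R)
        (\big[@madd n/@mzero n]_(i < k.+1) mscale (a i) (theta n m i.+1)) x i.
Proof.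
move=> hn hm _ _ f g x i.
rewrite /mhad had_big /mcomp /shiftz /f /g.
rewrite !getz_big //.
have hm0 : (0 < m)%N by lia.
under [RHS]eq_bigr do rewrite getz_scale // thetaE // decomp // andbA.
rewrite xor_distr.
under [X in X && _]eq_bigr do rewrite getz_scale // thetaE //.
set p := (Posz i + (t - Posz m))%R.
under [X in _ && X]eq_bigr do rewrite /madd /mone getz_add // getz_big // thetaE // Th0.
have -> : (Posz i + t = p + Posz m)%R by rewrite /p; lia.
case E: (\big[addb/false]_(i0 < k.+1) (a i0 && Th m x i0 (p + Posz m)%R)) => //=.
have [l /andP [_ hl]] := xor_ex E.
have GE u : (0 < u < m)%N ->
   \big[addb/false]_(1 <= j < s.+1) getz (mscale (b j) (theta n m j) x) (p + Posz u)%R = false.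
  move=> hu; rewrite big_nat_cond; apply: xor_false => j /andP [/andP [hj1 _] _]; rewrite getz_scale // thetaE //.
  apply/negbTE/negP => /andP [_ hj].
  apply: (key (j := j) (l := l) hu _ hj hl).
  by [].
have ZE v : (v < m)%N -> (Posz i + (t - Posz v))%R = (p + Posz (m - v))%R by move=> hv; rewrite /p; lia.
apply/bigandP/bigandP => H u hu _.
- have := H (m - u) ltac:(lia) isT.
  rewrite ZE; last by lia.
  rewrite GE; last by lia.
  by rewrite subKn ?addbF //; lia.
- rewrite ZE; last by lia.
  rewrite GE; last by lia.
  by rewrite addbF addbT; apply: H => //; lia.
Qed.
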